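(* Let $(\overline M,\varphi,\xi,\eta,g)$ be an almost $(\epsilon)$-contact metric manifold, $k\ge1$, $M$ as in the context, and $D=\bigoplus_{i=0}^kD_i$ a $k$-slant distribution on $M$ (with invariant component $D_0$) such that $D\perp\xi$. Let $G$ be the $g$-orthogonal complement of $D\oplus\langle\xi\rangle$ in $T\overline M|_M$, and let $f,w$ denote the orthogonal projections of $\varphi$ onto $D$ and onto $D^\perp$. Then $w(D_1),\dots,w(D_k)$ are mutually orthogonal subspaces of $G$ and $$G=\bigoplus_{i=1}^k w(D_i)\oplus H\quad(\text{orthogonal sum}),$$ where $H$ is the orthogonal complement of $\bigoplus_{i=1}^kw(D_i)$ in $G$, and $f(H)=\{0\}$. Moreover $\varphi(H)=w(H)=H$.
   Context: An almost $(\epsilon)$-contact metric manifold $(\overline M,\varphi,\xi,\eta,g)$, $\epsilon\in\{-1,1\}$, is a Riemannian manifold $(\overline M,g)$ with a unit vector field $\xi$, its dual 1-form $\eta(X)=g(X,\xi)$, and a $(1,1)$-tensor field $\varphi$ with $g(\varphi X,Y)=\epsilon g(X,\varphi Y)$ and $\varphi^2=\epsilon(I-\eta\otimes\xi)$. $M$ is either $\overline M$ or an immersed submanifold with $\xi$ tangent to $M$; $\langle\xi\rangle$ is the line bundle spanned by $\xi$. A distribution on $M$ is a smooth subbundle of constant rank of $T\overline M|_M$. For a distribution $D$ and $Z\in T_x\overline M$, $fZ$, $wZ$ are the $g$-orthogonal projections of $\varphi Z$ onto $D_x$ and onto its orthogonal complement $D_x^\perp$ in $T_x\overline M$; $f$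 is the component of $\varphi$ into $D$. The angle between a nonzero vector $u$ and a subspace $V$ is $\theta\in[0,\frac\pi2]$ with $\cos\theta=\|\mathrm{pr}_Vu\|/\|u\|$. A non-null distribution $D$ is slant with slant angle $\theta\in(0,\frac\pi2]$ if for all $x\in M$, $v\in D_x\setminus\{0\}$: $\varphi v\ne0$ and the angle between $\varphi v$ and $D_x$ is $\theta$. For $k\ge1$, $D$ is a $k$-slant distribution if there is a $g$-orthogonal decomposition $D=\bigoplus_{i=0}^kD_i$ into distributions with $D_i\ne\{0\}$ ($1\le i\le k$), $D_0$ possibly $\{0\}$, and pairwise distinct $\theta_1,\dots,\theta_k\in(0,\frac\pi2]$ with: (i) $D_i$ slant with angle $\theta_i$ ($1\le i\le k$); (ii) $\varphi(D_0)\subseteq D_0$; (iii) $f(D_i)\subseteq D_i$ ($1\le i\le k$). $D_0$ is the invariant component. *)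

(* Defs.v *)
From HB Require Import structures.
From mathcomp Require Import all_boot all_order all_algebra.
From mathcomp Require Import all_classical all_reals all_analysis.
Set Implicit Arguments. Unset Strict Implicit. Unset Printing Implicit Defensive.
Import Order.TTheory GRing.Theory Num.Theory.
Local Open Scope ring_scope.
Local Open Scope classical_set_scope.

(* Pointwise model: each fiber T_x(Mbar), x in M, is identified with 'rV[R]_n;
   the metric g_x is given by a Gram matrix Gm; subspaces are row spaces of
   matrices (mxalgebra); linear endomorphisms (phi_x) act by right
   multiplication u *m Phi. *)

Section Defs.
Variable R : realType.
Variable n : nat.

Definition ip (Gm : 'M[R]_n) (u v : 'rV[R]_n) : R := (u *m Gm *m v^T) 0 0.

Definition inner_product (Gm : 'M[R]_n) : Prop :=
  Gm^T = Gm /\ forall u : 'rV[R]_n, u != 0 -> 0 < ip Gm u u.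

Definition vnorm (Gm : 'M[R]_n) (u : 'rV[R]_n) : R := Num.sqrt (ip Gm u u).

Definition orth (Gm : 'M[R]_n) m1 m2 (V : 'M[R]_(m1, n)) (W : 'M[R]_(m2, n)) : Prop :=
  forall u v : 'rV[R]_n, (u <= V)%MS -> (v <= W)%MS -> ip Gm u v = 0.

Definition ocompl (Gm : 'M[R]_n) m (V : 'M[R]_(m, n)) : 'M[R]_n :=
  kermx (Gm *m V^T).

Definition is_proj (Gm : 'M[R]_n) m (V : 'M[R]_(m, n)) (u p : 'rV[R]_n) : Prop :=
  (p <= V)%MS /\ forall v : 'rV[R]_n, (v <= V)%MS -> ip Gm (u - p) v = 0.

Definition proj (Gm : 'M[R]_n) m (V : 'M[R]_(m, n)) (u : 'rV[R]_n) : 'rV[R]_n :=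
  xget 0 [set p | is_proj Gm V u p].

Definition vangle (Gm : 'M[R]_n) (u : 'rV[R]_n) m (V : 'M[R]_(m, n)) (theta : R) : Prop :=
  0 <= theta <= pi / 2 /\ cos theta = vnorm Gm (proj Gm V u) / vnorm Gm u.

Definition vset m (V : 'M[R]_(m, n)) : set 'rV[R]_n := [set u | (u <= V)%MS].

End Defs.

Section Bundle.
Variables (R : realType) (n : nat) (M : Type).

Definition tdistribution (D : M -> 'M[R]_n) : Prop :=
  exists r, forall x, \rank (D x) = r.

Definition almost_eps_contact_metric (eps : R) (Gm : M -> 'M[R]_n)
    (Phi : M -> 'M[R]_n) (xi : M -> 'rV[R]_n) : Prop :=
  (eps = 1 \/ eps = -1) /\
  forall x, [/\ inner_product (Gm x),
    ip (Gm x) (xi x) (xi x) = 1,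
    (forall u v, ip (Gm x) (u *m Phi x) v = eps * ip (Gm x) u (v *m Phi x)) &
    (forall u, u *m Phi x *m Phi x = eps *: (u - ip (Gm x) u (xi x) *: xi x))].

Definition fcomp (Gm Phi D : M -> 'M[R]_n) (x : M) (Z : 'rV[R]_n) : 'rV[R]_n :=
  proj (Gm x) (D x) (Z *m Phi x).

Definition wcomp (Gm Phi D : M -> 'M[R]_n) (x : M) (Z : 'rV[R]_n) : 'rV[R]_n :=
  proj (Gm x) (ocompl (Gm x) (D x)) (Z *m Phi x).

Definition slant (Gm Phi D : M -> 'M[R]_n) (theta : R) : Prop :=
  tdistribution D /\ (exists x, D x != 0) /\ 0 < theta <= pi / 2 /\
  forall x (v : 'rV[R]_n), (v <= D x)%MS -> v != 0 ->
    v *m Phi x != 0 /\ vangle (Gm x) (v *m Phi x) (D x) theta.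

(* D is a k-slant tdistribution with decomposition D = D0 (+) (+)_{i<k} Ds i
   (index i : 'I_k corresponds to D_{i+1}) and slant angles theta *)
Definition k_slant (k : nat) (Gm Phi D : M -> 'M[R]_n)
    (D0 : M -> 'M[R]_n) (Ds : 'I_k -> M -> 'M[R]_n) (theta : 'I_k -> R) : Prop :=
  (1 <= k)%N /\ tdistribution D /\ tdistribution D0 /\
  (forall i, tdistribution (Ds i)) /\
  (forall x, (D x == D0 x + \sum_(i < k) Ds i x)%MS) /\
  (forall x i, orth (Gm x) (D0 x) (Ds i x)) /\
  (forall x i j, i != j -> orth (Gm x) (Ds i x) (Ds j x)) /\
  (forall x i, Ds i x != 0) /\
  (forall i j, i != j -> theta i != theta j) /\
  (forall i, slant Gm Phi (Ds i) (theta i)) /\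
  (forall x, (D0 x *m Phi x <= D0 x)%MS) /\
  (forall x i (v : 'rV[R]_n), (v <= Ds i x)%MS -> (fcomp Gm Phi D x v <= Ds i x)%MS).

End Bundle.

(* Main.v *)
Require Import Defs.
From HB Require Import structures.
From mathcomp Require Import all_boot all_order all_algebra.
From mathcomp Require Import all_classical all_reals all_analysis.
Set Implicit Arguments. Unset Strict Implicit. Unset Printing Implicit Defensive.
Import Order.TTheory GRing.Theory Num.Theory.
Local Open Scope ring_scope.
Local Open Scope classical_set_scope.

Section LA.
Variables (R : realType) (n : nat) (G : 'M[R]_n).
Hypothesis HG : inner_product G.

Lemma ipC u v : ip G u v = ip G v u.
Proof.
have t (A : 'M[R]_1) : A 0 0 = (A^T) 0 0 by rewrite mxE.
by rewrite /ip [RHS]t !trmx_mul trmxK HG.1 mulmxA.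
Qed.
Lemma ipDl u v w : ip G (u + v) w = ip G u w + ip G v w.
Proof. by rewrite /ip !mulmxDl mxE. Qed.
Lemma ipZl a u w : ip G (a *: u) w = a * ip G u w.
Proof. by rewrite /ip -!scalemxAl mxE. Qed.
Lemma ipNl u w : ip G (- u) w = - ip G u w.
Proof. by rewrite -scaleN1r ipZl mulN1r. Qed.
Lemma ipBl u v w : ip G (u - v) w = ip G u w - ip G v w.
Proof. by rewrite ipDl ipNl. Qed.
Lemma ip0l w : ip G 0 w = 0.
Proof. by rewrite /ip !mul0mx mxE. Qed.
Lemma ipDr u v w : ip G w (u + v) = ip G w u + ip G w v.
Proof. by rewrite ipC ipDl ipC (ipC v). Qed.
Lemma ipZr a u w : ip G w (a *: u) = a * ip G w u.
Proof. by rewrite ipC ipZl ipC. Qed.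
Lemma ipBr u v w : ip G w (u - v) = ip G w u - ip G w v.
Proof. by rewrite ipC ipBl ipC (ipC v). Qed.
Lemma ip0r w : ip G w 0 = 0.
Proof. by rewrite ipC ip0l. Qed.

Lemma ip_eq0 u : ip G u u = 0 -> u = 0.
Proof.
move=> h; apply/eqP; apply: contraT => nz.
by have := HG.2 u nz; rewrite h ltxx.
Qed.

Lemma ocomplP m (V : 'M[R]_(m, n)) (u : 'rV[R]_n) :
  (u <= ocompl G V)%MS <-> (forall v, (v <= V)%MS -> ip G u v = 0).
Proof.
rewrite /ocompl sub_kermx; split.
  move=> /eqP H v /submxP [c ->].
  by rewrite /ip trmx_mul !mulmxA -(mulmxA u G) H mul0mx mxE.
move=> H; apply/eqP/rowP => j.
rewrite [RHS]mxE -(H (row j V) (row_sub j V)) /ip tr_row mulmxA !mxE.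
by apply: eq_bigr => k _; rewrite !mxE.
Qed.

Lemma ocompl_adds m1 m2 (A : 'M[R]_(m1, n)) (B : 'M[R]_(m2, n)) (u : 'rV[R]_n) :
  (u <= ocompl G (A + B)%MS)%MS <-> (u <= ocompl G A)%MS /\ (u <= ocompl G B)%MS.
Proof.
rewrite !ocomplP; split.
  move=> H; split=> v vs; apply: H.
    exact: submx_trans vs (addsmxSl _ _).
  exact: submx_trans vs (addsmxSr _ _).
move=> [H1 H2] v /sub_addsmxP [[c1 c2] ->] /=.
by rewrite ipDr H1 ?submxMl // H2 ?submxMl // addr0.
Qed.

Lemma subB_sub m (V : 'M[R]_(m, n)) (p q : 'rV[R]_n) :
  (p <= V)%MS -> (q <= V)%MS -> (p - q <= V)%MS.
Proof. by move=> hp hq; apply: addmx_sub hp _; rewrite eqmx_opp. Qed.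

Lemma is_proj_uniq m (V : 'M[R]_(m, n)) u p q :
  is_proj G V u p -> is_proj G V u q -> p = q.
Proof.
move=> [hp Hp] [hq Hq]; apply/eqP; rewrite -subr_eq0; apply/eqP/ip_eq0.
have E : p - q = (u - q) - (u - p).
  by rewrite opprD opprK addrACA subrr add0r addrC.
by rewrite {1}E ipBl Hq ?subB_sub // Hp ?subB_sub // subrr.
Qed.

Lemma projE m (V : 'M[R]_(m, n)) u p : is_proj G V u p -> Defs.proj G V u = p.
Proof.
move=> hp; apply: xget_unique => // y hy; exact: is_proj_uniq hy hp.
Qed.

Lemma proj_ex m (V : 'M[R]_(m, n)) :
  exists P : 'M[R]_n, forall u, is_proj G V u (u *m P).
Proof.
have := eq_row_base V; have := row_base_free V; move: (row_base V) => B fB eB.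
set K := B *m G *m B^T.
have Ku : K \in unitmx.
  rewrite -row_free_unit; apply: inj_row_free => v Hv.
  have : v *m B = 0.
    apply: ip_eq0; rewrite /ip trmx_mul !mulmxA -(mulmxA v B G) -(mulmxA v).
    by rewrite -/K Hv mul0mx mxE.
  by move/eqP; rewrite mulmx_free_eq0 // => /eqP.
exists (G *m B^T *m invmx K *m B) => u; split.
  by rewrite -eB mulmxA; apply: submxMl.
move=> v; rewrite -eB => /submxP [c ->].
have E : (u - u *m (G *m B^T *m invmx K *m B)) *m G *m B^T = 0.
  rewrite !mulmxBl; apply/eqP; rewrite subr_eq0; apply/eqP.
  rewrite -!mulmxA (mulmxA B G) -/K mulVmx //.
  by rewrite mulmx1.
by rewrite /ip trmx_mul [_ *m (B^T *m _)]mulmxA E mul0mx mxE.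
Qed.

Lemma proj_mx m (V : 'M[R]_(m, n)) :
  exists P : 'M[R]_n, forall u, Defs.proj G V u = u *m P.
Proof.
have [P HP] := proj_ex V; exists P => u; exact: projE (HP u).
Qed.

End LA.

Theorem mainTheorem5 (R : realType) (n : nat) (M : Type) (eps : R)
    (Gm Phi : M -> 'M[R]_n) (xi : M -> 'rV[R]_n)
    (TM : M -> 'M[R]_n) (k : nat)
    (D D0 : M -> 'M[R]_n) (Ds : 'I_k -> M -> 'M[R]_n) (theta : 'I_k -> R) :
  almost_eps_contact_metric eps Gm Phi xi ->
  (* M is Mbar or a submanifold with xi tangent to M *)
  tdistribution TM -> (forall x, (xi x <= TM x)%MS) ->
  (1 <= k)%N ->
  k_slant Gm Phi D D0 Ds theta ->
  (* D is orthogonal to xi *)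
  (forall x, orth (Gm x) (D x) (xi x)) ->
  forall x : M,
    let Gc := ocompl (Gm x) (D x + xi x)%MS in
    exists W : 'I_k -> 'M[R]_n,
      (forall i, vset (W i) = [set wcomp Gm Phi D x v | v in vset (Ds i x)]) /\
      (forall i, (W i <= Gc)%MS) /\
      (forall i j, i != j -> orth (Gm x) (W i) (W j)) /\
      let H := (Gc :&: ocompl (Gm x) (\sum_(i < k) W i)%MS)%MS in
      (Gc == \sum_(i < k) W i + H)%MS /\
      (forall h, (h <= H)%MS -> fcomp Gm Phi D x h = 0) /\
      [set h *m Phi x | h in vset H] = vset H /\
      [set wcomp Gm Phi D x h | h in vset H] = vset H.
Proof.
move=> [Heps Hac] _ _ _ Hks HDxi x Gc.
have [HG Hxi HPhi HPhi2] := Hac x.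
move: Hks => [_ [_ [_ [_ [HDsum [HorthD0 [HorthDs [_ [_ [_ [HD0inv Hfinv]]]]]]]]]]].
have eps2 : eps * eps = 1 by case: Heps => ->; rewrite ?mulrNN mulr1.
have xiF0 : xi x *m Phi x = 0.
  apply: (ip_eq0 HG); rewrite HPhi HPhi2 Hxi scale1r subrr.
  by rewrite scaler0 (ip0r HG) mulr0.
have xiF (u : 'rV[R]_n) : ip (Gm x) (u *m Phi x) (xi x) = 0.
  by rewrite HPhi xiF0 (ip0r HG) mulr0.
have FF (u v : 'rV[R]_n) : ip (Gm x) v (xi x) = 0 ->
    ip (Gm x) (u *m Phi x) (v *m Phi x) = ip (Gm x) u v.
  move=> hv; rewrite HPhi HPhi2 hv scale0r subr0 (ipZr HG) mulrA eps2.
  by rewrite mul1r.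
have Dxi (v : 'rV[R]_n) : (v <= D x)%MS -> ip (Gm x) v (xi x) = 0.
  by move=> hv; apply: HDxi hv (submx_refl _).
have eD := eqmxP (HDsum x).
have DsD i : (Ds i x <= D x)%MS.
  by rewrite eD; apply: submx_trans (addsmxSr _ _); apply: (sumsmx_sup i).
have D0D : (D0 x <= D x)%MS by rewrite eD addsmxSl.
have [Pf HPf] := proj_ex HG (D x).
have [Pw HPw] := proj_ex HG (ocompl (Gm x) (D x)).
have hf (u : 'rV[R]_n) : fcomp Gm Phi D x u = u *m Phi x *m Pf.
  by rewrite /fcomp (projE HG (HPf _)).
have hw (u : 'rV[R]_n) : wcomp Gm Phi D x u = u *m Phi x *m Pw.
  by rewrite /wcomp (projE HG (HPw _)).
have wperp (u v : 'rV[R]_n) : (v <= D x)%MS -> ip (Gm x) (u *m Pw) v = 0.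
  by move=> hv; move: (HPw u).1 => /ocomplP; apply.
have fin (u : 'rV[R]_n) : (u *m Pf <= D x)%MS by exact: (HPf u).1.
have wsplit (u : 'rV[R]_n) : u *m Pw = u - u *m Pf.
  apply: (is_proj_uniq HG (HPw u)); split.
    by apply/ocomplP => v hv; apply: (HPf u).2.
  move=> v /ocomplP hv; rewrite opprB addrC subrK (ipC HG).
  by apply: hv; apply: fin.
have fDs i (d : 'rV[R]_n) : (d <= Ds i x)%MS -> (d *m Phi x *m Pf <= Ds i x)%MS.
  by move=> hd; rewrite -hf; apply: Hfinv.
have fzero (y : 'rV[R]_n) : (y <= ocompl (Gm x) (D x))%MS -> y *m Pf = 0.
  move=> hy; apply: (is_proj_uniq HG (HPf y)); split; first exact: sub0mx.
  by move=> v hv; rewrite subr0; move/ocomplP: hy; apply.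
have wid (y : 'rV[R]_n) : (y <= ocompl (Gm x) (D x))%MS -> y *m Pw = y.
  by move=> hy; rewrite wsplit fzero // subr0.
have wD0 (y : 'rV[R]_n) : (y <= D x)%MS -> y *m Pw = 0.
  move=> hy; apply: (is_proj_uniq HG (HPw y)); split; first exact: sub0mx.
  by move=> v /ocomplP hv; rewrite subr0 (ipC HG); apply: hv.
have perp_xi (y : 'rV[R]_n) : ip (Gm x) y (xi x) = 0 -> (y <= ocompl (Gm x) (xi x))%MS.
  move=> hy; apply/ocomplP => v /submxP [c ->].
  by rewrite [c]mx11_scalar mul_scalar_mx (ipZr HG) hy mulr0.
pose W i := Ds i x *m Phi x *m Pw.
have wmem i (v : 'rV[R]_n) : (v <= W i)%MS <->
    exists2 d, (d <= Ds i x)%MS & v = d *m Phi x *m Pw.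
  split.
    move=> /submxP [c ->]; exists (c *m Ds i x); first exact: submxMl.
    by rewrite /W !mulmxA.
  by move=> [d hd ->]; rewrite /W; apply: submxMr; apply: submxMr.
have wGc (d : 'rV[R]_n) : (d <= D x)%MS -> (d *m Phi x *m Pw <= Gc)%MS.
  move=> hd; rewrite /Gc; apply/(ocompl_adds HG) => //; split; first exact: (HPw _).1.
  apply: perp_xi; rewrite wsplit ipBl xiF Dxi ?subrr //.
pose S := (\sum_(i < k) W i)%MS.
have SGc : (S <= Gc)%MS.
  apply/sumsmx_subP => i _; apply/row_subP => j.
  by rewrite /W !row_mul; apply: wGc; apply: submx_trans (DsD i); apply: row_sub.
have Smem (z : 'rV[R]_n) : (z <= S)%MS -> exists2 d, (d <= D x)%MS & z = d *m Phi x *m Pw.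
  move=> /sub_sumsmxP [u_ ->]; exists (\sum_(i < k) u_ i *m Ds i x).
    by apply: summx_sub => i _; apply: submx_trans (submxMl _ _) (DsD i).
  by rewrite !mulmx_suml; apply: eq_bigr => i _; rewrite /W !mulmxA.
have Sin (d : 'rV[R]_n) : (d <= D x)%MS -> (d *m Phi x *m Pw <= S)%MS.
  rewrite eD => /sub_addsmxP [[c1 c2] ->] /=.
  rewrite !mulmxDl.
  rewrite (wD0 (c1 *m D0 x *m Phi x)) ?add0r; last first.
    apply: submx_trans D0D; rewrite -mulmxA.
    exact: submx_trans (submxMl _ _) (HD0inv x).
  have /sub_sumsmxP [u_ ->] : (c2 *m (\sum_(i < k) Ds i x)%MS <= \sum_(i < k) Ds i x)%MS.
    exact: submxMl.
  rewrite !mulmx_suml; apply: summx_sub => i _.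
  apply: (sumsmx_sup i) => //; rewrite /W -!mulmxA; exact: submxMl.
have GcD (h : 'rV[R]_n) : (h <= Gc)%MS -> (h <= ocompl (Gm x) (D x))%MS.
  by move=> /(ocompl_adds HG) [].
have Gcxi (h : 'rV[R]_n) : (h <= Gc)%MS -> ip (Gm x) h (xi x) = 0.
  by move=> /(ocompl_adds HG) [_ /ocomplP Hh]; apply: Hh; apply: submx_refl.
have HFperp (h : 'rV[R]_n) : (h <= Gc)%MS -> (h <= ocompl (Gm x) S)%MS ->
    (h *m Phi x <= ocompl (Gm x) (D x))%MS.
  move=> hG hS; apply/ocomplP => d hd; rewrite HPhi.
  have -> : d *m Phi x = d *m Phi x *m Pw + d *m Phi x *m Pf.
    by rewrite wsplit subrK.
  rewrite (ipDr HG); move/ocomplP: hS => -> //; last exact: Sin.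
  by move/GcD/ocomplP: hG => ->; rewrite ?addr0 ?mulr0 //.
exists W; split.
  move=> i; apply/seteqP; split => y /=.
    move=> /wmem [d hd ->]; exists d => //; by rewrite hw.
  by move=> [d hd <-]; rewrite hw; apply/wmem; exists d.
split.
  move=> i; apply/row_subP => j.
  by rewrite /W !row_mul; apply: wGc; apply: submx_trans (DsD i); apply: row_sub.
split.
  move=> i j ij u v /wmem [d1 h1 ->] /wmem [d2 h2 ->].
  rewrite [d2 *m _ *m _]wsplit (ipBr HG) (wperp _ (d2 *m Phi x *m Pf)) ?fin // subr0.
  rewrite wsplit ipBl FF ?Dxi ?(DsD j) ?(submx_trans h2) //.
  rewrite (HorthDs x i j ij d1 d2 h1 h2) sub0r (ipC HG).
  have -> : d2 *m Phi x = d2 *m Phi x *m Pw + d2 *m Phi x *m Pf.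
    by rewrite wsplit subrK.
  rewrite ipDl wperp ?fin // add0r.
  rewrite (HorthDs x j i) ?oppr0 //; first by rewrite eq_sym.
  exact: fDs. exact: fDs.
move=> H.
have HH (h : 'rV[R]_n) : (h <= H)%MS -> (h <= Gc)%MS /\ (h <= ocompl (Gm x) S)%MS.
  by rewrite sub_capmx => /andP.
have HF (h : 'rV[R]_n) : (h <= H)%MS -> (h *m Phi x <= H)%MS.
  move=> /HH [hG hS]; rewrite sub_capmx; apply/andP; split.
    rewrite /Gc; apply/(ocompl_adds HG); split; first exact: HFperp.
    exact: perp_xi.
  apply/ocomplP => z /Smem [d hd ->].
  rewrite wsplit (ipBr HG) FF ?Dxi //.
  move/GcD/ocomplP: (hG) => -> //.
  by move/ocomplP: (HFperp h hG hS) => ->; rewrite ?subrr.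
split.
  apply/andP; split.
    apply/row_subP => j; set y := row j Gc.
    have [PS HPS] := proj_ex HG S.
    have -> : y = y *m PS + (y - y *m PS) by rewrite addrC subrK.
    apply: addmx_sub_adds; first exact: (HPS y).1.
    rewrite sub_capmx; apply/andP; split.
      apply: subB_sub; first exact: row_sub.
      exact: submx_trans (HPS y).1 SGc.
    by apply/ocomplP => v hv; apply: (HPS y).2.
  by rewrite addsmx_sub SGc capmxSl.
split.
  move=> h /HH [hG hS]; rewrite hf fzero //; exact: HFperp.
have imF : [set h *m Phi x | h in vset H] = vset H.
  apply/seteqP; split => y /=.
    by move=> [h hh <-]; apply: HF.
  move=> hy; exists (eps *: (y *m Phi x)).
    by rewrite /vset /=; apply: scalemx_sub; apply: HF.
  rewrite -scalemxAl HPhi2 Gcxi ?(HH y hy).1 // scale0r subr0 scalerA eps2.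
  by rewrite scale1r.
split => //.
have -> : [set wcomp Gm Phi D x h | h in vset H] = [set h *m Phi x | h in vset H].
  apply/seteqP; split => y /= [h hh <-]; exists h => //; rewrite hw wid //.
    by have [hG hS] := HH h hh; apply: HFperp.
  by have [hG hS] := HH h hh; apply: HFperp.
exact: imF.
Qed.
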